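(* Let $X$ be a topological space, let $Y$ be a functionally Hausdorff space, let $S$ be a dense subset of $X$ and let $f:S\to Y$ be continuous. Then the following are equivalent: (1) $f$ has a continuous extension to $X$; (2) for every family $\{A_\beta\}$ of closed subsets of $Y$ with $\bigcap_\beta A_\beta=\emptyset$ one has $\bigcap_\beta\overline{f^{-1}(A_\beta)}=\emptyset$ (closures in $X$), and for every open set $V$ of $Y$ the set $X_{\theta^\omega}(f^{-1}(V))$ is open in $X$.
   Context: A space is functionally Hausdorff if any two distinct points can be separated by a continuous real-valued function. $\mathcal N(x)$ is the set of open neighborhoods of $x$ in $X$. For a subset $A$ of $Y$ and an ordinal $\alpha>0$, an $\alpha$-hull of $A$ is an open set $U\supseteq A$ for which there exists a family $\{U_\beta\}_{\beta\le\alpha}$ of open sets containing $A$ with $\mathrm{cl}\,U_\beta\subseteq U_{\beta+1}$ whenever $\beta+1\le\alpha$ and $U=U_\alpha=\bigcup_{\beta\le\alpha}U_\beta$. For $M\subseteq Y$, $\mathrm{cl}_{\theta^\omega}M$ is the set of $y\in Y$ such that every $\omega$-hull $U$ of $y$ satisfies $\mathrm{cl}\,U\cap M\neq\emptyset$. For $V\subseteq Y$, $X_{\theta^\omega}(f^{-1}(V))$ is the set of points $x\in X$ with $\bigcap\{\mathrm{cl}_{\theta^\omega} f(P\cap S):P\in\mathcal N(x)\}\subseteq V$. *)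

(* Defs.v *)
From HB Require Import structures.
From mathcomp Require Import all_boot all_order all_algebra.
From mathcomp Require Import all_classical all_reals.
From mathcomp Require Import topology.
From mathcomp Require Import Rstruct Rstruct_topology.
From Stdlib Require Import Reals.

Set Implicit Arguments.
Unset Strict Implicit.
Unset Printing Implicit Defensive.

Local Open Scope classical_set_scope.

Definition functionally_hausdorff (Y : topologicalType) : Prop :=
  forall x y : Y, x <> y ->
    exists g : Y -> Rdefinitions.R, continuous g /\ g x <> g y.

Definition open_nbhds (X : topologicalType) (x : X) : set (set X) :=
  [set P | open P /\ P x].

(* Ordinals beta <= omega are represented by [option nat]:
   [Some n] is the finite ordinal n and [None] is omega. *)
Definition omega_hull (Y : topologicalType) (A U : set Y) : Prop :=
  exists Ub : option nat -> set Y,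
    (forall b, open (Ub b) /\ A `<=` Ub b) /\
    (forall n : nat, closure (Ub (Some n)) `<=` Ub (Some n.+1)) /\
    U = Ub None /\
    Ub None = \bigcup_(b in [set: option nat]) Ub b.

Definition cl_theta_omega (Y : topologicalType) (M : set Y) : set Y :=
  [set y | forall U, omega_hull [set y] U -> closure U `&` M !=set0].

(* X_{theta^omega}(f^{-1}(V)) for f : S -> Y (f given on X, relevant on S). *)
Definition X_theta_omega (X Y : topologicalType) (S : set X) (f : X -> Y)
    (V : set Y) : set X :=
  [set x | \bigcap_(P in open_nbhds x) cl_theta_omega (f @` (P `&` S)) `<=` V].

(* Main.v *)
Require Import Defs.
From HB Require Import structures.
From mathcomp Require Import all_boot all_order all_algebra.
From mathcomp Require Import all_classical all_reals.
From mathcomp Require Import topology normedtype lra.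
From mathcomp Require Import Rstruct Rstruct_topology.
Import Order.TTheory GRing.Theory Num.Theory numFieldTopology.Exports numFieldNormedType.Exports.
Local Open Scope classical_set_scope.
Local Open Scope ring_scope.

Section Sep.
Variables (R : realType) (Y : topologicalType) (h : Y -> R).
Hypothesis hc : continuous h.

Definition oB (c r : R) : set Y := h @^-1` ([set t | c - r < t] `&` [set t | t < c + r]).
Definition cB (c r : R) : set Y := h @^-1` ([set t | c - r <= t] `&` [set t | t <= c + r]).

Lemma oB_open c r : open (oB c r).
Proof. by move/continuousP: hc; apply; apply: openI; [apply: open_gt|apply: open_lt]. Qed.

Lemma cB_closed c r : closed (cB c r).
Proof. by apply: preimage_closed => [x _|]; [apply: hc|apply: closedI; [apply: closed_ge|apply: closed_le]]. Qed.

Lemma clos_oB c r : closure (oB c r) `<=` cB c r.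
Proof.
have -> : cB c r = closure (cB c r) by apply/closure_id; exact: cB_closed.
apply: closure_subset => z [/= H1 H2]; split; rewrite /= le_eqVlt ?H1 ?H2 orbT //.
Qed.

Lemma hull_ex (y : Y) (e : R) : 0 < e ->
  omega_hull [set y] (oB (h y) (e *+ 2)).
Proof.
move=> e0.
pose r (n : nat) := e *+ 2 - e / n.+1%:R.
have qpos n : 0 < e / n.+1%:R by rewrite divr_gt0 // ltr0n.
have qle n : e / n.+1%:R <= e.
  by rewrite ler_pdivrMr ?ltr0n //; apply: ler_peMr; [exact: ltW | rewrite ler1n].
have qlt n : e / n.+2%:R < e / n.+1%:R.
  by rewrite ltr_pM2l // ltf_pV2 ?posrE ?ltr0n // ltr_nat.
have rpos n : 0 < r n.
 move: (qle n); rewrite /r mulr2n; set q := e / _; lra.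
have rlt n : r n < r n.+1 by move: (qlt n); rewrite /r; set q := e / _; set q' := e / _; lra.
have rle n : r n <= e *+ 2 by move: (qpos n); rewrite /r mulr2n; set q := e / _; lra.
exists (fun b => if b is Some n then oB (h y) (r n) else oB (h y) (e *+ 2)).
split; [|split; [|split=> //]].
- move=> [n|]; (split; first exact: oB_open); move=> _ -> /=.
    by split=> /=; move: (rpos n); lra.
  by split=> /=; rewrite mulr2n; lra.
- move=> n; apply: subset_trans (clos_oB _ _) _ => z [/= H1 H2].
  by move: (rlt n) => H; split => /=; lra.
- rewrite eqEsubset; split; first by move=> z Hz; exists None.
  move=> z [[n|] _] // [/= H1 H2].
  by move: (rle n) => H; split => /=; lra.
Qed.

Lemma sep_lt (y1 y2 : Y) : h y1 < h y2 -> exists U1 U2,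
  omega_hull [set y1] U1 /\ omega_hull [set y2] U2 /\ closure U1 `&` closure U2 = set0.
Proof.
move=> H12; set e := (h y2 - h y1) / 6%:R.
have e0 : 0 < e by rewrite /e divr_gt0 // ?subr_gt0 // ltr0n.
have He : h y2 - h y1 = e * 6%:R by rewrite /e divfK // pnatr_eq0.
exists (oB (h y1) (e *+ 2)), (oB (h y2) (e *+ 2)); split; [|split].
- exact: hull_ex.
- exact: hull_ex.
- rewrite -subset0 => z [/clos_oB [/= A1 A2] /clos_oB [/= B1 B2]].
  move: He A1 A2 B1 B2; rewrite !mulr2n; set c1 := h y1; set c2 := h y2; set t := h z; lra.
Qed.

Lemma sep (y1 y2 : Y) : h y1 != h y2 -> exists U1 U2,
  omega_hull [set y1] U1 /\ omega_hull [set y2] U2 /\ closure U1 `&` closure U2 = set0.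
Proof.
rewrite neq_lt => /orP [] H; first exact: sep_lt.
have [U1 [U2 [A [B C]]]] := @sep_lt y2 y1 H.
by exists U2, U1; rewrite setIC.
Qed.
End Sep.

Lemma closureP (T : topologicalType) (A : set T) x :
  (forall P, open P -> P x -> A `&` P !=set0) -> closure A x.
Proof.
move=> H B; rewrite nbhsE /= => -[P [Po Px] PB].
have [z [Az Pz]] := H P Po Px; by exists z; split; [|apply: PB].
Qed.

Lemma hull_open (Y : topologicalType) (y : Y) U :
  omega_hull [set y] U -> open U /\ U y.
Proof.
move=> [Ub [H1 [_ [-> _]]]]; have [o s] := H1 None; split => //; exact: s.
Qed.

Lemma dense_meet (X : topologicalType) (S P : set X) x :
  dense S -> open P -> P x -> exists s, P s /\ S s.
Proof.
move=> dS Po Px; have [s [Ps Ss]] := dS P (ex_intro _ x Px) Po; by exists s.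
Qed.

Local Close Scope ring_scope.

Theorem corollary3p5 (X Y : topologicalType) (S : set X) (f : X -> Y) :
  functionally_hausdorff Y ->
  dense S ->
  {within S, continuous f} ->
  ((exists g : X -> Y, continuous g /\ (forall x, S x -> g x = f x)) <->
   ((forall (I : Type) (A : I -> set Y),
       (forall i, closed (A i)) ->
       \bigcap_(i in [set: I]) A i = set0 ->
       \bigcap_(i in [set: I]) closure (S `&` f @^-1` (A i)) = set0) /\
    (forall V : set Y, open V -> open (X_theta_omega S f V)))).
Proof.
move=> fH dS _; split.
- move=> [g [gc gext]]; split.
  + move=> I A Acl A0; rewrite -subset0 => x Hx.
    have : (\bigcap_(i in [set: I]) A i) (g x).
      move=> i _; have cx := Hx i Logic.I.
      have clg : closed (g @^-1` A i).
        by apply: preimage_closed => [y _|]; [exact: gc | exact: Acl].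
      move: (clg); rewrite closure_id => E; suff : (g @^-1` A i) x by []; rewrite E.
      by apply: (closureS _ cx) => y [Sy Ay]; rewrite /= gext.
    by rewrite A0.
  + have gx_in : forall x P, open_nbhds x P -> cl_theta_omega (f @` (P `&` S)) (g x).
      move=> x P [Po Px] U /(@hull_open _ _ _) [Uo Ug].
      have gUo : open (g @^-1` U) by move/continuousP: gc; apply.
      have [s [[Ps Us] Ss]] := @dense_meet _ _ _ _ dS (openI Po gUo) (conj Px Ug).
      exists (f s); split; first by apply: subset_closure; rewrite -gext.
      by exists s.
    have guniq : forall x y, (forall P, open_nbhds x P -> cl_theta_omega (f @` (P `&` S)) y) -> y = g x.
      move=> x y Hy; case: (pselect (y = g x)) => // ne.
      have [h [hc hne]] := fH _ _ ne.
      have [U1 [U2 [H1 [H2 H12]]]] := @sep _ _ _ hc _ _ (introN eqP hne).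
      have [U2o U2g] := @hull_open _ _ _ H2.
      have gUo : open (g @^-1` U2) by move/continuousP: gc; apply.
      have [z [cz [s [Ps Ss] fsz]]] := Hy (g @^-1` U2) (conj gUo U2g) U1 H1.
      have : (closure U1 `&` closure U2) z.
        by split => //; apply: subset_closure; rewrite -fsz -gext.
      by rewrite H12.
    move=> V Vo; suff -> : X_theta_omega S f V = g @^-1` V by move/continuousP: gc; apply.
    rewrite eqEsubset; split => x.
    * by move=> Hx; apply: Hx => P HP; exact: gx_in.
    * by move=> Vg y Hy; rewrite (guniq x y Hy).
- move=> [Hfam Hopen].
  have Ne : forall x, exists y,
      (\bigcap_(P in open_nbhds x) cl_theta_omega (f @` (P `&` S))) y.
    move=> x; pose I := {P : set X | open_nbhds x P}.
    pose A (i : I) := closure (f @` (sval i `&` S)).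
    case: (pselect (\bigcap_(i in [set: I]) A i = set0)) => [H0|Hne].
      have E := Hfam I A (fun i => @closed_closure _ _) H0.
      have : (\bigcap_(i in [set: I]) closure (S `&` f @^-1` A i)) x.
        move=> [P [Po Px]] _; apply: closureP => Q Qo Qx.
        have [s [[Ps Qs] Ss]] := @dense_meet _ _ _ _ dS (openI Po Qo) (conj Px Qx).
        exists s; split => //; split => //; apply: subset_closure; by exists s.
      by rewrite E.
    have [y Hy] : exists y, (\bigcap_(i in [set: I]) A i) y.
      apply: contrapT => nE; apply: Hne; rewrite -subset0 => y Hy; apply: nE; by exists y.
    exists y => P HP U Uh.
    have cy := Hy (exist _ P HP) Logic.I.
    have [Uo Uy] := @hull_open _ _ _ Uh.
    have [z [Fz Uz]] := cy U (open_nbhs_nbhs (conj Uo Uy)).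
    by exists z; split => //; exact: subset_closure.
  have uniq' : forall x y1 y2,
      (\bigcap_(P in open_nbhds x) cl_theta_omega (f @` (P `&` S))) y1 ->
      (\bigcap_(P in open_nbhds x) cl_theta_omega (f @` (P `&` S))) y2 -> y1 = y2.
    move=> x y1 y2 G1 G2; case: (pselect (y1 = y2)) => // ne.
    have [h [hc hne]] := fH _ _ ne.
    have [U1 [U2 [H1 [H2 H12]]]] := @sep _ _ _ hc _ _ (introN eqP hne).
    pose A (b : bool) := if b then closure U1 else closure U2.
    have Acl : forall b, closed (A b) by case; exact: closed_closure.
    have A0 : \bigcap_(b in [set: bool]) A b = set0.
      rewrite -subset0 => z Hz.
      have : (closure U1 `&` closure U2) z by split; [exact: (Hz true) | exact: (Hz false)].
      by rewrite H12.
    have E := Hfam bool A Acl A0.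
    have : (\bigcap_(b in [set: bool]) closure (S `&` f @^-1` A b)) x.
      move=> [] _; apply: closureP => Q Qo Qx.
        have [z [cz [s [Qs Ss] fsz]]] := G1 Q (conj Qo Qx) U1 H1.
        by exists s; split => //; split => //; rewrite /= fsz.
      have [z [cz [s [Qs Ss] fsz]]] := G2 Q (conj Qo Qx) U2 H2.
      by exists s; split => //; split => //; rewrite /= fsz.
    by rewrite E.
  pose g x := sval (cid (Ne x)).
  have gG x : (\bigcap_(P in open_nbhds x) cl_theta_omega (f @` (P `&` S))) (g x).
    exact: svalP (cid (Ne x)).
  exists g; split.
  + apply/continuousP => V Vo.
    suff -> : g @^-1` V = X_theta_omega S f V by apply: Hopen.
    rewrite eqEsubset; split => x.
    * by move=> Vg y Gy; rewrite (uniq' x y (g x) Gy (gG x)).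
    * by move=> Hx; apply: Hx; exact: gG.
  + move=> s Ss; apply: (uniq' s) (gG s) _.
    move=> P [Po Ps] U /(@hull_open _ _ _) [_ Uf]; exists (f s); split.
      exact: subset_closure.
    by exists s.
Qed.
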